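(* Let $A\subseteq\Gamma$ be a finite set. Then for any integer $k\ge2$, $$\|A\|_{U^{k+1}}\ge\frac{\|A\|_{U^k}^{(3k-2)/(k-1)}}{\|A\|_{U^{k-1}}^{2k/(k-1)}}.$$ In particular, $\|A\|_{U^3}\ge\mathsf{E}^4(A)/|A|^8$.
   Context: $\Gamma$ is an abelian group. For $d\ge1$ the unnormalized Gowers norm of a set is $\|A\|_{U^d}=\sum_{x,h_1,\dots,h_d\in\Gamma}\prod_{\omega\in\{0,1\}^d}A(x+\omega\cdot h)$, where $\omega\cdot h=\sum_i\omega_ih_i$ and $A(\cdot)$ is the indicator function. Thus $\|A\|_{U^1}=|A|^2$ and $\|A\|_{U^2}=\mathsf{E}(A)=|\{a_1-a_2=a_3-a_4:a_i\in A\}|$. *)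

(* Defs.v *)
From HB Require Import structures.
From mathcomp Require Import all_boot all_order all_algebra finmap.
From mathcomp Require Import reals exp.
Set Implicit Arguments. Unset Strict Implicit. Unset Printing Implicit Defensive.
Import Order.TTheory GRing.Theory Num.Theory.
Local Open Scope ring_scope.
Local Open Scope fset_scope.

Definition diffset (G : zmodType) (A : {fset G}) : {fset G} :=
  [fset (a - b) | a in A, b in A].

(* Unnormalized Gowers norm
     ||A||_{U^d} = sum_{x,h_1..h_d in G} prod_{w in {0,1}^d} A(x + w.h).
   A summand is nonzero only if x \in A (w = 0) and x + h_i \in A (w = e_i),
   hence h_i \in A - A; the sum is therefore written over that finite support. *)
Definition gowers (G : zmodType) (d : nat) (A : {fset G}) : nat :=
  \sum_(x : A) \sum_(h : {ffun 'I_d -> diffset A})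
    \prod_(w : {ffun 'I_d -> bool})
      nat_of_bool ((val x + \sum_(i < d) (if w i then val (h i) else 0)%R)%R \in A).

(* Main.v *)
Require Import Defs.
From HB Require Import structures.
From mathcomp Require Import all_boot all_order all_algebra finmap.
From mathcomp Require Import reals exp.
From mathcomp Require Import sequences.
From mathcomp Require Import ring lra zify.
Import Order.TTheory GRing.Theory Num.Theory.
Set Implicit Arguments. Unset Strict Implicit. Unset Printing Implicit Defensive.
Local Open Scope ring_scope.

Lemma powR_expR (R : realType) (y t : R) : (0 < y \/ t = 0) -> y `^ t = expR (t * ln y).
Proof.
case=> [y0|->]; first by rewrite /powR gt_eqF.
by rewrite powRr0 mul0r expR0.
Qed.

Lemma amgm (R : realType) (J : finType) (th y : J -> R) :
  (forall j, 0 <= th j) -> \sum_j th j = 1 -> (forall j, 0 <= y j) ->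
  \prod_j y j `^ th j <= \sum_j th j * y j.
Proof.
move=> th0 th1 y0.
have S0 : 0 <= \sum_j th j * y j by apply: sumr_ge0 => j _; apply: mulr_ge0.
case: (boolP [exists j, (th j != 0) && (y j == 0)]).
  case/existsP=> j /andP[tj /eqP yj].
  by rewrite (bigD1 j) //= yj powR0 // mul0r.
rewrite negb_exists => /forallP H.
have yp : forall j, th j != 0 -> 0 < y j.
  move=> j tj; have := H j; rewrite tj /= lt0r => ->; exact: y0.
set M := \sum_j th j * y j.
have M0 : 0 < M.
  have : exists j, th j != 0.
    apply/existsP; apply: contraT; rewrite negb_exists => /forallP Hz.
    move: th1; rewrite big1 => [/eqP|j _]; first by rewrite eq_sym oner_eq0.
    by have := Hz j; rewrite negbK => /eqP.
  case=> j tj; rewrite /M (bigD1 j) //=; apply: ltr_pwDl.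
    by rewrite mulr_gt0 // ?yp // lt0r tj th0.
  by apply: sumr_ge0 => i _; apply: mulr_ge0.
have -> : \prod_j y j `^ th j = expR (\sum_j th j * ln (y j)).
  rewrite expR_sum; apply: eq_bigr => j _; apply: powR_expR.
  by case: (eqVneq (th j) 0) => [->|tj]; [right|left; apply: yp].
rewrite -[X in _ <= X]lnK ?posrE // ler_expR.
have -> : ln M = \sum_j th j * ln M by rewrite -mulr_suml th1 mul1r.
rewrite -subr_le0 -sumrB.
apply: le_trans (_ : \sum_j th j * (y j / M - 1) <= 0).
  apply: ler_sum => j _; rewrite -mulrBr.
  case: (eqVneq (th j) 0) => [->|tj]; first by rewrite !mul0r.
  apply: ler_wpM2l; first exact: th0.
  have yj := yp j tj.
  rewrite -ln_div ?posrE //.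
  have := @le_ln1Dx R (y j / M - 1); rewrite [1 + _]addrC subrK; apply.
  by rewrite ltrBrDl subrr divr_gt0.
rewrite (eq_bigr (fun j => th j * y j / M - th j)); last first.
  by move=> j _; rewrite mulrBr mulr1 mulrA.
by rewrite sumrB -mulr_suml th1 divff ?gt_eqF // subrr.
Qed.

Lemma holder (R : realType) (I J : finType) (th : J -> R) (x : J -> I -> R) :
  (forall j, 0 <= th j) -> \sum_j th j = 1 -> (forall j i, 0 <= x j i) ->
  \sum_i \prod_j x j i `^ th j <= \prod_j (\sum_i x j i) `^ th j.
Proof.
move=> th0 th1 x0.
set X := fun j => \sum_i x j i.
have X0 : forall j, 0 <= X j by move=> j; apply: sumr_ge0 => i _.
have R0 : 0 <= \prod_j X j `^ th j by apply: prodr_ge0 => j _; apply: powR_ge0.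
case: (boolP [exists j, (th j != 0) && (X j == 0)]).
  case/existsP=> j /andP[tj /eqP Xj].
  have xj : forall i, x j i = 0.
    by move=> i; apply: (psumr_eq0P (fun i _ => x0 j i) Xj).
  by rewrite big1 // => i _; rewrite (bigD1 j) //= xj powR0 // mul0r.
rewrite negb_exists => /forallP H.
have Xp : forall j, th j != 0 -> 0 < X j.
  move=> j tj; have := H j; rewrite tj /= lt0r => ->; exact: X0.
have key : forall i, \prod_j x j i `^ th j =
    (\prod_j X j `^ th j) * \prod_j (x j i / X j) `^ th j.
  move=> i; rewrite -big_split /=; apply: eq_bigr => j _.
  case: (eqVneq (th j) 0) => [->|tj]; first by rewrite !powRr0 mulr1.
  rewrite -powRM //; last by rewrite divr_ge0.
  by rewrite mulrC divfK // gt_eqF // Xp.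
rewrite (eq_bigr _ (fun i _ => key i)).
rewrite -mulr_sumr; rewrite -[X in _ <= X]mulr1; apply: ler_wpM2l => //.
have E : \sum_i \sum_j th j * (x j i / X j) = 1.
  rewrite exchange_big /= -th1.
  apply: eq_bigr => j _; rewrite -mulr_sumr -mulr_suml.
  case: (eqVneq (th j) 0) => [->|tj]; first by rewrite mul0r.
  by rewrite divff ?mulr1 // gt_eqF // Xp.
rewrite -[in leRHS]E; apply: ler_sum => i _.
apply: (@amgm R J th (fun j => x j i / X j)) => // j; exact: divr_ge0.
Qed.
Definition ins (D : Type) (n : nat) (i : 'I_n.+1) (h : {ffun 'I_n -> D}) (y : D)
  : {ffun 'I_n.+1 -> D} :=
  [ffun j => if unlift i j is Some j' then h j' else y].
Definition drp (D : Type) (n : nat) (i : 'I_n.+1) (g : {ffun 'I_n.+1 -> D})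
  : {ffun 'I_n -> D} := [ffun j => g (lift i j)].

Lemma ins_lift D n (i : 'I_n.+1) h (y : D) z : ins i h y (lift i z) = h z.
Proof. by rewrite ffunE liftK. Qed.
Lemma ins_at D n (i : 'I_n.+1) h (y : D) : ins i h y i = y.
Proof. by rewrite ffunE unlift_none. Qed.
Lemma drp_ins D n (i : 'I_n.+1) h (y : D) : drp i (ins i h y) = h.
Proof. by apply/ffunP => j; rewrite ffunE ins_lift. Qed.
Lemma ins_drp D n (i : 'I_n.+1) (g : {ffun 'I_n.+1 -> D}) : ins i (drp i g) (g i) = g.
Proof.
apply/ffunP => j; rewrite ffunE; case: unliftP => [j' ->|->] //.
by rewrite ffunE.
Qed.
Lemma ins_uniq D n (i : 'I_n.+1) (g : {ffun 'I_n.+1 -> D}) h y :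
  g i = y -> drp i g = h -> g = ins i h y.
Proof. by move=> <- <-; rewrite ins_drp. Qed.

Lemma sum_ins (R : Type) (idx : R) (op : Monoid.com_law idx) (D : finType) n
   (i : 'I_n.+1) (F : {ffun 'I_n.+1 -> D} -> R) :
  \big[op/idx]_g F g = \big[op/idx]_h \big[op/idx]_y F (ins i h y).
Proof.
rewrite pair_big /=.
rewrite (reindex (fun p : {ffun 'I_n -> D} * D => ins i p.1 p.2)) //.
exists (fun g => (drp i g, g i)) => [[h y] _|g _] /=.
  by rewrite drp_ins ins_at.
by rewrite ins_drp.
Qed.

Lemma drp_ins_max D n (i' : 'I_n.+1) (g' : {ffun 'I_n.+1 -> D}) (y : D) :
  drp (widen_ord (leqnSn _) i') (ins ord_max g' y) = ins ord_max (drp i' g') y.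
Proof.
apply: ins_uniq.
  rewrite ffunE.
  have -> : lift (widen_ord (leqnSn n.+1) i') ord_max = ord_max.
    apply: val_inj => /=; rewrite /bump.
    by have := ltn_ord i'; rewrite ltnS => ->.
  exact: ins_at.
apply/ffunP => j; rewrite !ffunE.
have -> : lift (widen_ord (leqnSn n.+1) i') (lift ord_max j) =
          lift ord_max (lift i' j).
  apply: val_inj => /=; rewrite /bump.
  have hj : (n <= j)%N = false by rewrite leqNgt ltn_ord.
  rewrite hj add0n; case: (i' <= j)%N => /=.
    by rewrite add1n ltnS hj.
  by rewrite add0n ltnNge (ltnW (ltn_ord j)).
by rewrite liftK.
Qed.
Lemma powR_prod (R : realType) (J : finType) (x : J -> R) (p : R) :
  (forall j, 0 <= x j) -> (\prod_j x j) `^ p = \prod_j x j `^ p.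
Proof.
move=> x0.
suff [] : 0 <= \prod_j x j /\ (\prod_j x j) `^ p = \prod_j x j `^ p by [].
elim/big_rec2: _ => [|j a b _ [a0 IH]]; first by rewrite powR1.
by split; [apply: mulr_ge0|rewrite powRM // IH].
Qed.

Lemma ffun0_eq (D : Type) (z1 z2 : {ffun 'I_0 -> D}) : z1 = z2.
Proof. by apply/ffunP => -[]. Qed.

Lemma sum_ins0 (R : realType) (D : finType) (F : {ffun 'I_1 -> D} -> R) z :
  \sum_h F h = \sum_y F (ins ord_max z y).
Proof.
rewrite (sum_ins _ ord_max) (eq_bigr (fun _ => \sum_y F (ins ord_max z y))).
  by rewrite sumr_const card_ffun card_ord expn0.
by move=> z' _; rewrite (ffun0_eq z' z).
Qed.

Lemma eqleR (R : realType) (x y : R) : x = y -> x <= y.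
Proof. by move->. Qed.

Lemma LW (R : realType) (D : finType) (m : nat) (F : {ffun 'I_m.+1 -> D} -> R) :
  (forall h, 0 <= F h) ->
  \sum_(g : {ffun 'I_m.+2 -> D}) \prod_(i : 'I_m.+2) F (drp i g) `^ (m.+1%:R^-1)
   <= (\sum_h F h) `^ (m.+2%:R / m.+1%:R).
Proof.
elim: m F => [|m IH] F F0.
  rewrite (sum_ins _ ord_max) divr1 powR_mulrn; last by apply: sumr_ge0.
  rewrite expr2 mulr_suml; apply: eqleR.
  apply: eq_bigr => g' _.
  rewrite (sum_ins0 _ (drp ord0 g')) mulr_sumr; apply: eq_bigr => y _.
  rewrite big_ord_recr big_ord1 /= drp_ins (drp_ins_max ord0) invr1.
  by rewrite !powRr1 // mulrC.
set th := (m.+2%:R : R)^-1.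
have th0 : 0 <= th by rewrite invr_ge0.
have SF0 : 0 <= \sum_h F h by apply: sumr_ge0.
pose H := fun z : {ffun 'I_m.+1 -> D} => \sum_y F (ins ord_max z y).
have H0 : forall z, 0 <= H z by move=> z; apply: sumr_ge0.
have SH : \sum_z H z = \sum_h F h by rewrite [RHS](sum_ins _ ord_max).
rewrite (sum_ins _ ord_max).
have E1 : forall g' : {ffun 'I_m.+2 -> D},
   \sum_y \prod_(i < m.+3) F (drp i (ins ord_max g' y)) `^ th =
   (\sum_y \prod_(j < m.+2) F (ins ord_max (drp j g') y) `^ th) * F g' `^ th.
  move=> g'; rewrite mulr_suml; apply: eq_bigr => y _.
  rewrite big_ord_recr /= drp_ins; congr (_ * _).
  by apply: eq_bigr => j _; rewrite drp_ins_max.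
rewrite (eq_bigr _ (fun g' _ => E1 g')).
have S2 : forall g' : {ffun 'I_m.+2 -> D},
   \sum_y \prod_(j < m.+2) F (ins ord_max (drp j g') y) `^ th <=
   \prod_(j < m.+2) H (drp j g') `^ th.
  move=> g'.
  apply: (@holder R D _ (fun _ => th) (fun j y => F (ins ord_max (drp j g') y))) => //.
  by rewrite sumr_const card_ord -mulr_natr mulVf // pnatr_eq0.
apply: le_trans (_ : \sum_g' (\prod_(j < m.+2) H (drp j g') `^ th) * F g' `^ th <= _).
  by apply: ler_sum => g' _; apply: ler_wpM2r; [apply: powR_ge0|apply: S2].
pose thb := fun b : bool => if b then th else (m.+1%:R / m.+2%:R : R).
pose xb := fun (b : bool) (g' : {ffun 'I_m.+2 -> D}) =>
   if b then F g' else \prod_(j < m.+2) H (drp j g') `^ (m.+1%:R^-1).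
have thb0 : forall b, 0 <= thb b by case; rewrite /thb // divr_ge0.
have thb1 : \sum_b thb b = 1.
  rewrite big_bool /= /thb /th -!natr1.
  have : (0:R) <= m%:R by []. move=> h. field. lra.
have xb0 : forall b g', 0 <= xb b g'.
  by case=> g' /=; [apply: F0|apply: prodr_ge0 => j _; apply: powR_ge0].
have HB := @holder R _ _ thb xb thb0 thb1 xb0.
have E2 : forall g' : {ffun 'I_m.+2 -> D},
   (\prod_(j < m.+2) H (drp j g') `^ th) * F g' `^ th =
   \prod_b xb b g' `^ thb b.
  move=> g'; rewrite big_bool /xb /thb /= mulrC; congr (_ * _).
  rewrite powR_prod; last by move=> j; apply: powR_ge0.
  apply: eq_bigr => j _; rewrite -powRrM; congr (_ `^ _).
  rewrite /th -!natr1.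
  have : (0:R) <= m%:R by []. move=> h. field. lra.
rewrite (eq_bigr _ (fun g' _ => E2 g')).
apply: le_trans HB _.
rewrite big_bool /xb /thb /=.
have IH' := IH H H0; rewrite SH in IH'.
have S4 : (\sum_g' \prod_(j < m.+2) H (drp j g') `^ (m.+1%:R^-1)) `^ (m.+1%:R / m.+2%:R)
          <= \sum_h F h.
  apply: le_trans (_ : ((\sum_h F h) `^ (m.+2%:R / m.+1%:R)) `^ (m.+1%:R / m.+2%:R) <= _).
    apply: ge0_ler_powR => //; first by rewrite divr_ge0.
      rewrite nnegrE; apply: sumr_ge0 => g' _; apply: prodr_ge0 => j _; exact: powR_ge0.
    by rewrite nnegrE powR_ge0.
  rewrite -powRrM.
  have -> : (m.+2%:R / m.+1%:R * (m.+1%:R / m.+2%:R) : R) = 1.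
    rewrite -!natr1. have : (0:R) <= m%:R by []. move=> h. field. lra.
  by rewrite powRr1.
apply: le_trans (_ : (\sum_h F h) `^ th * \sum_h F h <= _).
  by apply: ler_wpM2l; [apply: powR_ge0|].
have -> : (m.+3%:R / m.+2%:R : R) = th + 1.
  rewrite /th -!natr1. have : (0:R) <= m%:R by []. move=> h. field. lra.
rewrite powRD; first by rewrite powRr1.
apply/implyP => /eqP h; exfalso; move: h; rewrite /th.
have : 0 < (m.+2%:R : R)^-1 + 1 by apply: addr_gt0; rewrite ?invr_gt0.
by move=> /gt_eqF /eqP.
Qed.
Lemma invpowR (R : realType) (a p : R) : 0 < a -> (a^-1) `^ p = (a `^ p)^-1.
Proof.
move=> a0; rewrite /powR !gt_eqF ?invr_gt0 // lnV ?posrE // mulrN expRN.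
reflexivity.
Qed.

Lemma powR_pown (R : realType) (x p : R) (n : nat) :
  0 <= x -> (x `^ p) ^+ n = x `^ (p * n%:R).
Proof. by move=> x0; rewrite -powR_mulrn ?powR_ge0 // -powRrM. Qed.

Lemma sq_half (R : realType) (x : R) : 0 <= x -> (x ^+ 2) `^ (2^-1) = x.
Proof.
move=> x0; rewrite -powR_mulrn // -powRrM mulfV ?powRr1 //.
by rewrite pnatr_eq0.
Qed.

Lemma sum_face_div (R : realType) (D : finType) (m : nat)
  (a : {ffun 'I_m.+1 -> D} -> R) (r : {ffun 'I_m.+2 -> D} -> R) (i : 'I_m.+2) :
  (forall h, 0 <= a h) ->
  (forall h, \sum_y r (ins i h y) = a h ^+ 2) ->
  \sum_g r g / a (drp i g) = \sum_h a h.
Proof.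
move=> a0 face; rewrite (sum_ins _ i); apply: eq_bigr => h _.
under eq_bigr do rewrite drp_ins.
rewrite -mulr_suml face.
case: (eqVneq (a h) 0) => [->|ah]; first by rewrite expr2 !mul0r.
by rewrite expr2 mulfK.
Qed.

Lemma r_le_face (R : realType) (D : finType) (m : nat)
  (a : {ffun 'I_m.+1 -> D} -> R) (r : {ffun 'I_m.+2 -> D} -> R) (i : 'I_m.+2) g :
  (forall g, 0 <= r g) ->
  (forall h, \sum_y r (ins i h y) = a h ^+ 2) ->
  r g <= a (drp i g) ^+ 2.
Proof.
move=> r0 face; rewrite -face (bigD1 (g i)) //= ins_drp lerDl.
by apply: sumr_ge0.
Qed.

Lemma nat_id (m : nat) : (2 * (2 * m.+1).+1 = (3 * m.+1).+1 + m.+2)%N.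
Proof. lia. Qed.

Lemma chain (R : realType) (D : finType) (m : nat)
  (a : {ffun 'I_m.+1 -> D} -> R) (r : {ffun 'I_m.+2 -> D} -> R) :
  (forall h, 0 <= a h) -> (forall g, 0 <= r g) ->
  (forall (i : 'I_m.+2) h, \sum_y r (ins i h y) = a h ^+ 2) ->
  (\sum_h a h ^+ 2) ^+ (3 * m.+1).+1 <=
    (\sum_g r g ^+ 2) ^+ m.+1 * (\sum_h a h) ^+ (2 * m.+1).+2.
Proof.
move=> a0 r0 face.
set U := \sum_h a h; set V := \sum_h a h ^+ 2; set T := \sum_g r g ^+ 2.
have U0 : 0 <= U by apply: sumr_ge0.
have V0 : 0 <= V by apply: sumr_ge0 => h _; apply: sqr_ge0.
have T0 : 0 <= T by apply: sumr_ge0 => h _; apply: sqr_ge0.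
have VE : V = \sum_g r g.
  by rewrite (sum_ins _ ord_max); apply: eq_bigr => h _; rewrite face.
pose pi g := \prod_(i < m.+2) a (drp i g).
have pi0 : forall g, 0 <= pi g by move=> g; apply: prodr_ge0 => i _.
have rpos : forall g i, r g != 0 -> 0 < a (drp i g).
  move=> g i rg; rewrite lt0r a0 andbT; apply: contra rg => /eqP ha.
  rewrite eq_le r0 andbT; have := @r_le_face R D m a r i g r0 (face i).
  by rewrite ha expr2 mulr0.
have pipos : forall g, r g != 0 -> 0 < pi g.
  by move=> g rg; apply: prodr_gt0 => i _; apply: rpos.
pose k := (m.+2%:R : R).
pose n := (m.+1%:R : R).
have k0 : 0 < k by rewrite /k ltr0n.
have n0 : 0 < n by rewrite /n ltr0n.
pose P := \sum_g r g / pi g `^ k^-1.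
have P0 : 0 <= P.
  by apply: sumr_ge0 => g _; apply: divr_ge0 => //; apply: powR_ge0.
have PU : P <= U.
  have pw : forall g, r g / pi g `^ k^-1 <=
      \sum_(i < m.+2) k^-1 * (r g / a (drp i g)).
    move=> g; case: (eqVneq (r g) 0) => [->|rg].
      by rewrite mul0r; apply: sumr_ge0 => i _; rewrite mul0r mulr0.
    rewrite /pi powR_prod // -prodfV.
    rewrite (eq_bigr (fun i => (a (drp i g))^-1 `^ k^-1)); last first.
      by move=> i _; rewrite invpowR // rpos.
    rewrite [leRHS](eq_bigr (fun i => r g * (k^-1 * (a (drp i g))^-1))); last first.
      by move=> i _; rewrite mulrCA.
    rewrite -mulr_sumr; apply: ler_wpM2l => //.
    apply: amgm => [i||i].
    - by rewrite invr_ge0 ltW.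
    - by rewrite sumr_const card_ord -mulr_natr mulVf // gt_eqF.
    - by rewrite invr_ge0.
  apply: le_trans (ler_sum _ (fun g _ => pw g)) _.
  rewrite exchange_big /=.
  rewrite (eq_bigr (fun i => k^-1 * U)); last first.
    move=> i _; rewrite -mulr_sumr; congr (_ * _).
    by apply: sum_face_div => //; apply: face.
  by rewrite sumr_const card_ord -mulr_natl mulrA mulfV ?mul1r // gt_eqF.
pose L := \sum_(g : {ffun 'I_m.+2 -> D}) \prod_(i < m.+2) (a (drp i g) ^+ 2) `^ n^-1.
have L0 : 0 <= L.
  by apply: sumr_ge0 => g _; apply: prodr_ge0 => i _; apply: powR_ge0.
have LV : L <= V `^ (k / n).
  by apply: (@LW R D m (fun h => a h ^+ 2)) => h; apply: sqr_ge0.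
pose Q := \sum_g r g * pi g `^ n^-1.
have Q0 : 0 <= Q.
  by apply: sumr_ge0 => g _; apply: mulr_ge0 => //; apply: powR_ge0.
have QTL : Q ^+ 2 <= T * L.
  pose xb := fun (b : bool) g => if b then r g ^+ 2
    else \prod_(i < m.+2) (a (drp i g) ^+ 2) `^ n^-1.
  have HB := @holder R _ _ (fun _ => 2^-1) xb.
  have {HB} HB : Q <= T `^ 2^-1 * L `^ 2^-1.
    have E : Q = \sum_g \prod_b xb b g `^ 2^-1.
      apply: eq_bigr => g _; rewrite big_bool /= /xb sq_half //; congr (_ * _).
      rewrite [RHS]powR_prod; last by move=> i; apply: powR_ge0.
      rewrite /pi powR_prod //; apply: eq_bigr => i _.
      rewrite -powRrM -powR_mulrn // -powRrM; congr (_ `^ _).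
      by rewrite mulrC mulfVK // pnatr_eq0.
    rewrite E; apply: le_trans (HB _ _ _) _ => //.
    - by move=> _; rewrite invr_ge0.
    - by rewrite big_bool /=; field.
    - case=> g /=; first by apply: sqr_ge0.
      by apply: prodr_ge0 => i _; apply: powR_ge0.
    - by rewrite big_bool /=.
  apply: le_trans (_ : (T `^ 2^-1 * L `^ 2^-1) ^+ 2 <= _).
    by apply: lerXn2r; rewrite ?nnegrE // mulr_ge0 // powR_ge0.
  by rewrite exprMn !powR_pown // mulVf ?powRr1 // ?pnatr_eq0.
pose s := ((2 * m.+1).+1%:R : R).
have s0 : 0 < s by rewrite /s ltr0n.
have hm : (0 : R) <= m%:R by [].
have hk : k = n + 1 by rewrite /k /n -[m.+2]addn1 natrD.
have hs : s = 2 * n + 1 by rewrite /s /n -[(2 * m.+1).+1]addn1 natrD natrM.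
pose th := n / s; pose th' := k / s.
have th0 : 0 < th by apply: divr_gt0.
have th'0 : 0 < th' by apply: divr_gt0.
have thth : th + th' = 1.
  rewrite /th /th' hk hs; field; lra.
have VQP : V <= Q `^ th * P `^ th'.
  pose xc := fun (b : bool) g => if b then r g * pi g `^ n^-1 else r g / pi g `^ k^-1.
  pose tb := fun b : bool => if b then th else th'.
  have E : V = \sum_g \prod_b xc b g `^ tb b.
    rewrite VE; apply: eq_bigr => g _; rewrite big_bool /= /xc /tb.
    case: (eqVneq (r g) 0) => [->|rg].
      by rewrite !mul0r powR0 ?mul0r // gt_eqF.
    have p := pipos g rg.
    have rp : 0 < r g by rewrite lt0r rg r0.
    rewrite powRM ?powR_ge0 // ?ltW //.
    rewrite powRM ?invr_ge0 ?powR_ge0 // ?ltW //.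
    rewrite invpowR ?powR_gt0 // -!powRrM.
    have -> : n^-1 * th = s^-1 by rewrite /th mulKf // gt_eqF.
    have -> : k^-1 * th' = s^-1 by rewrite /th' mulKf // gt_eqF.
    rewrite mulrACA mulfV ?mulr1; last by rewrite gt_eqF // powR_gt0.
    rewrite -powRD; last by rewrite rg implybT.
    by rewrite thth powRr1 // ltW.
  rewrite E; apply: le_trans (@holder R _ _ tb xc _ _ _) _.
  - by case; rewrite /tb ltW.
  - by rewrite big_bool.
  - case=> g /=; first by rewrite mulr_ge0 // powR_ge0.
    by rewrite divr_ge0 // powR_ge0.
  - by rewrite big_bool /=.
have key : V ^+ (2 * (2 * m.+1).+1) <= T ^+ m.+1 * V ^+ m.+2 * U ^+ (2 * m.+1).+2.
  apply: le_trans (_ : (Q `^ th * P `^ th') ^+ (2 * (2 * m.+1).+1) <= _).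
    by apply: lerXn2r; rewrite ?nnegrE // mulr_ge0 // powR_ge0.
  rewrite exprMn !powR_pown //.
  have -> : th * (2 * (2 * m.+1).+1)%:R = (2 * m.+1)%:R.
    rewrite natrM -/s /th hs natrM -/n; field; lra.
  have -> : th' * (2 * (2 * m.+1).+1)%:R = ((2 * m.+1).+2)%:R.
    rewrite natrM -/s /th' hs -[(2 * m.+1).+2]addn2 natrD natrM -/n hk; field; lra.
  rewrite !powR_mulrn //; apply: ler_pM => //.
  - by apply: exprn_ge0.
  - by apply: exprn_ge0.
  - rewrite exprM; apply: le_trans (_ : (T * L) ^+ m.+1 <= _).
      by apply: lerXn2r; rewrite ?nnegrE // ?exprn_ge0 // mulr_ge0.
    rewrite exprMn; apply: ler_wpM2l; first exact: exprn_ge0.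
    apply: le_trans (_ : (V `^ (k / n)) ^+ m.+1 <= _).
      by apply: lerXn2r; rewrite ?nnegrE // powR_ge0.
    rewrite powR_pown // mulrAC mulfK ?gt_eqF // powR_mulrn //.
  - by apply: lerXn2r; rewrite ?nnegrE.
have e := nat_id m.
case: (eqVneq V 0) => [->|Vn0].
  by rewrite expr0n /= mulr_ge0 // exprn_ge0.
have Vp : 0 < V by rewrite lt0r Vn0 V0.
rewrite -(ler_pM2r (exprn_gt0 m.+2 Vp)).
by rewrite -exprD -e mulrAC.
Qed.

Require Import Defs.




Definition cube (G : zmodType) (A : {fset G}) (d : nat)
  (h : {ffun 'I_d -> diffset A}) (x : G) : bool :=
  [forall w : {ffun 'I_d -> bool},
     ((x + \sum_(i < d) (if w i then val (h i) else 0))%R \in A)].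

Definition cnt (G : zmodType) (A : {fset G}) (d : nat)
  (h : {ffun 'I_d -> diffset A}) : nat :=
  (\sum_(x : A) nat_of_bool (cube h (val x)))%N.

Lemma prod_bool (T : finType) (P : pred T) :
  (\prod_(w : T) nat_of_bool (P w))%N = nat_of_bool [forall w, P w].
Proof.
case: (boolP [forall w, P w]) => [/forallP H|].
  by rewrite big1 // => w _; rewrite H.
rewrite negb_forall => /existsP [w Pw].
by rewrite (bigD1 w) //= (negbTE Pw) mul0n.
Qed.

Lemma gowersE (G : zmodType) (A : {fset G}) (d : nat) :
  gowers d A = (\sum_(h : {ffun 'I_d -> diffset A}) cnt h)%N.
Proof.
rewrite /gowers exchange_big /=; apply: eq_bigr => h _.
by apply: eq_bigr => x _; rewrite prod_bool.
Qed.

Lemma cube_ins (G : zmodType) (A : {fset G}) (d : nat) (i : 'I_d.+1)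
  (h : {ffun 'I_d -> diffset A}) (y : diffset A) (x : G) :
  cube (ins i h y) x = cube h x && cube h (x + val y).
Proof.
have S : forall w : {ffun 'I_d.+1 -> bool},
    \sum_(j < d.+1) (if w j then val (ins i h y j) else 0) =
    (if w i then val y else 0) +
      \sum_(j < d) (if w (lift i j) then val (h j) else 0).
  by move=> w; rewrite (bigD1_ord i) //= ins_at; congr (_ + _);
     apply: eq_bigr => j _; rewrite ins_lift.
have S' : forall (w : {ffun 'I_d -> bool}) b,
    \sum_(j < d) (if ins i w b (lift i j) then val (h j) else 0) =
    \sum_(j < d) (if w j then val (h j) else 0).
  by move=> w b; apply: eq_bigr => j _; rewrite ins_lift.
have S'' : forall (w : {ffun 'I_d.+1 -> bool}),
    \sum_(j < d) (if w (lift i j) then val (h j) else 0) =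
    \sum_(j < d) (if drp i w j then val (h j) else 0).
  by move=> w; apply: eq_bigr => j _; rewrite ffunE.
apply/forallP/andP.
  move=> H; split; apply/forallP => w'.
    by have := H (ins i w' false); rewrite S ins_at add0r S'.
  by have := H (ins i w' true); rewrite S ins_at S' addrA.
case=> /forallP H1 /forallP H2 w; rewrite S S''.
by case: (w i); rewrite ?add0r ?addrA.
Qed.

Lemma cube_in (G : zmodType) (A : {fset G}) (d : nat) (h : {ffun 'I_d -> diffset A}) x :
  cube h x -> x \in A.
Proof.
move/forallP/(_ [ffun _ => false]).
by rewrite big1 ?addr0 // => j _; rewrite ffunE.
Qed.

Lemma count_val (G : choiceType) (S : {fset G}) (t : G) :
  (\sum_(z : S) nat_of_bool (val z == t))%N = nat_of_bool (t \in S).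
Proof.
case: (boolP (t \in S)) => tS.
  rewrite (bigD1 [` tS]%fset) //= eqxx big1 // => z zn; case: eqP => // zt.
  have ez : z = [` tS]%fset by apply: val_inj.
  by rewrite ez eqxx in zn.
by rewrite big1 // => z _; case: eqP => // zt; rewrite -zt (valP z) in tS.
Qed.

Lemma diff_in (G : zmodType) (A : {fset G}) (a b : G) :
  a \in A -> b \in A -> a - b \in diffset A.
Proof. by move=> aA bA; apply/imfset2P; exists a => //; exists b. Qed.

Lemma shift_count (G : zmodType) (A : {fset G}) (d : nat)
  (h : {ffun 'I_d -> diffset A}) (x : A) :
  (\sum_(y : diffset A) nat_of_bool (cube h (val x + val y)%R))%N = cnt h.
Proof.
have E : forall y : diffset A, nat_of_bool (cube h (val x + val y)%R) =
    (\sum_(z : A) nat_of_bool (val z == (val x + val y)%R) * nat_of_bool (cube h (val z)))%N.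
  move=> y.
  rewrite (eq_bigr (fun z : A => nat_of_bool (val z == (val x + val y)%R) *
      nat_of_bool (cube h (val x + val y)%R))%N); last first.
    by move=> z _; case: eqP => [->|] //; rewrite !mul0n.
  rewrite -big_distrl /= count_val.
  by case: (boolP (cube h _)) => [/cube_in ->|]; rewrite ?muln0 ?muln1.
rewrite (eq_bigr _ (fun y _ => E y)) exchange_big /=.
apply: eq_bigr => z _.
rewrite -big_distrl /= mulnC.
have -> : (\sum_(y : diffset A) nat_of_bool (val z == (val x + val y)%R))%N = 1%N.
  rewrite (eq_bigr (fun y : diffset A => nat_of_bool (val y == (val z - val x)%R))).
    by rewrite count_val diff_in //; apply: valP.
  by move=> y _; rewrite [in RHS]eq_sym subr_eq [(val y + _)%R]addrC.
by rewrite muln1.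
Qed.

Lemma face_cnt (G : zmodType) (A : {fset G}) (d : nat) (i : 'I_d.+1)
  (h : {ffun 'I_d -> diffset A}) :
  (\sum_(y : diffset A) cnt (ins i h y))%N = (cnt h ^ 2)%N.
Proof.
rewrite /cnt exchange_big /=.
rewrite (eq_bigr (fun x : A => nat_of_bool (cube h (val x)) * cnt h)%N).
  by rewrite -big_distrl /= -/(cnt h) mulnn.
move=> x _; rewrite -(shift_count h x) big_distrr /=; apply: eq_bigr => y _.
by rewrite cube_ins; case: (cube h _); case: (cube h _).
Qed.

Lemma gowersS (G : zmodType) (A : {fset G}) (d : nat) :
  gowers d.+1 A = (\sum_(h : {ffun 'I_d -> diffset A}) cnt h ^ 2)%N.
Proof.
rewrite gowersE (sum_ins _ ord_max); apply: eq_bigr => h _.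
exact: face_cnt.
Qed.

Lemma gowers1 (G : zmodType) (A : {fset G}) : gowers 1 A = (#|` A| ^ 2)%N.
Proof.
rewrite gowersS.
have c0 : forall h : {ffun 'I_0 -> diffset A}, cnt h = #|` A|.
  move=> h; rewrite /cnt cardfE -sum1_card; apply: eq_bigr => x _.
  have -> : cube h (val x) = true.
    apply/forallP => w; rewrite big_ord0 addr0; exact: valP.
  by [].
rewrite (eq_bigr (fun _ => (#|` A| ^ 2)%N)); last by move=> h _; rewrite c0.
by rewrite sum_nat_const card_ffun card_ord expn0 mul1n.
Qed.

Lemma mainM (R : realType) (G : zmodType) (A : {fset G}) (m : nat) :
  ((gowers m.+2 A)%:R : R) ^+ (3 * m.+1).+1 <=
    (gowers m.+3 A)%:R ^+ m.+1 * (gowers m.+1 A)%:R ^+ (2 * m.+1).+2.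
Proof.
rewrite (gowersS A m.+1) (gowersS A m.+2) (gowersE A m.+1) !natr_sum.
rewrite (eq_bigr (fun g : {ffun 'I_m.+1 -> diffset A} => (cnt g)%:R ^+ 2)); last first.
  by move=> g _; rewrite natrX.
rewrite (eq_bigr (fun g : {ffun 'I_m.+2 -> diffset A} => (cnt g)%:R ^+ 2)); last first.
  by move=> g _; rewrite natrX.
apply: (@chain R (diffset A) m (fun h => (cnt h)%:R) (fun g => (cnt g)%:R)) => // i h.
by rewrite -natr_sum face_cnt natrX.
Qed.

Lemma nat_e1 (m : nat) : (3 * m.+2 - 2 = (3 * m.+1).+1)%N. Proof. lia. Qed.
Lemma nat_e2 (m : nat) : (m.+2 - 1 = m.+1)%N. Proof. lia. Qed.
Lemma nat_e3 (m : nat) : (2 * m.+2 = (2 * m.+1).+2)%N. Proof. lia. Qed.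

Unset Implicit Arguments.

Theorem proposition7 (R : realType) (G : zmodType) (A : {fset G}) :
  (forall k : nat, (2 <= k)%N ->
     ((gowers k.+1 A)%:R : R) >=
       ((gowers k A)%:R `^ ((3 * k - 2)%:R / (k - 1)%:R))
       / ((gowers k.-1 A)%:R `^ ((2 * k)%:R / (k - 1)%:R)))
  /\
  ((gowers 3 A)%:R : R) >= ((gowers 2 A)%:R ^+ 4) / ((#|` A|)%:R ^+ 8).
Proof.
split.
  case=> [|[|m]] // _.
  rewrite nat_e1 nat_e2 nat_e3 /=.
  have M := mainM R A m.
  set V := ((gowers m.+2 A)%:R : R) in M *.
  set U := ((gowers m.+1 A)%:R : R) in M *.
  set T := ((gowers m.+3 A)%:R : R) in M *.
  have V0 : 0 <= V by [].
  have U0 : 0 <= U by [].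
  have T0 : 0 <= T by [].
  set n := (m.+1%:R : R).
  have n0 : 0 < n by rewrite /n ltr0n.
  case: (eqVneq U 0) => [->|Un0].
    rewrite powR0 ?invr0 ?mulr0 //.
    by rewrite mulf_neq0 // ?invr_eq0 gt_eqF // ltr0n.
  have Up : 0 < U by rewrite lt0r Un0 U0.
  rewrite ler_pdivrMr ?powR_gt0 //.
  have ET : T = (T ^+ m.+1) `^ n^-1.
    by rewrite -powR_mulrn // -powRrM mulfV ?powRr1 // gt_eqF.
  rewrite [V `^ _]powRrM [U `^ _]powRrM !powR_mulrn // ET.
  rewrite -powRM ?exprn_ge0 //.
  apply: ge0_ler_powR => //; rewrite ?nnegrE ?invr_ge0 ?(ltW n0) //.
    by apply: exprn_ge0.
  by rewrite mulr_ge0 // exprn_ge0.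
have M := mainM R A 0.
rewrite gowers1 natrX -exprM expr1 in M.
have c0 : (0 : R) <= #|` A|%:R by [].
case: (eqVneq (#|` A|%:R : R) 0) => [->|cn0].
  by rewrite expr0n /= invr0 mulr0.
rewrite ler_pdivrMr ?exprn_gt0 ?lt0r ?cn0 //.
Qed.
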